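(* Let $\alpha_{\mathrm{model}}$ be the hybrid program defined in the context. Then the following two differential dynamic logic formulas are valid, i.e. true in every state (every assignment of real values to all variables and constants): $$\mathrm{Ctx}\ \wedge\ x_e + L \le x_o\ \wedge\ D_e(B_{\min}) + L < D_o\ \wedge\ t_c = t - T\ \ \rightarrow\ \ [\alpha_{\mathrm{model}}]\,\big(x_e + L \le x_o\big),$$ $$\mathrm{Ctx}\ \wedge\ x_o + L \le x_e\ \wedge\ \hat D_o + L < \hat D_e(A_{\min})\ \wedge\ t_c = t - T\ \ \rightarrow\ \ [\alpha_{\mathrm{model}}]\,\big(x_o + L \le x_e\big).$$ That is, from every state satisfying the respective premise, every final state of every run of $\alpha_{\mathrm{model}}$ satisfies the respective distance condition.
   Context: Hybrid programs and their semantics (differential dynamic logic). A state assigns a real number to every variable. Programs denote transition relations on states: $?\varphi$ stays in the current state if $\varphi$ holds there and has no transition otherwise; $x := e$ sets $x$ to the value of term $e$; $x := *$ sets $x$ to an arbitrary real; $\{x_1'=e_1,\dots,x_n'=e_n \,\&\, \psi\}$ follows the solution of the ODE system for any duration $r\ge 0$ (including $0$) such that $\psi$ holds throughout $[0,r]$, other variables unchanged; $\alpha\cup\beta$ is nondeterministic choice; $\alpha;\beta$ is sequential composition; $\alpha^*$ repeats $\alpha$ any finite number $\ge 0$ of times. $\mathtt{if}(\varphi)\,\alpha$ abbreviates $(?\varphi;\alpha)\cup ?\neg\varphi$, and $\mathtt{if}(\varphi)\,\alpha\ \mathtt{else}\ \beta$ abbreviates $(?\varphi;\alpha)\cup(?\neg\varphi;\beta)$.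 $[\alpha]\phi$ holds in state $\omega$ iff $\phi$ holds in every state reachable from $\omega$ by $\alpha$. Variables: ego car position $x_e$, velocity $v_e$, acceleration $a_e$; other car position $x_o$, velocity $v_o$, acceleration $a_o$; time $t$; clock $t_c$. Constants (not changed by programs): $T, L, V, A_{\min}, A_{\max}, B_{\min}, B_{\max}$. $\mathrm{Ctx} \equiv T>0 \wedge L>0 \wedge V>0 \wedge B_{\max}\le B_{\min}<0<A_{\min}\le A_{\max} \wedge B_{\max}\le a_e\le A_{\max}\wedge B_{\max}\le a_o\le A_{\max} \wedge 0\le v_e\le V \wedge 0\le v_o\le V$. Abbreviations: $D_e(a) = x_e - \frac{v_e^2}{2a}$, $D_o = x_o - \frac{v_o^2}{2B_{\max}}$; $\hat v_i = v_i - V$, $\hat x_i = x_i - V t$ for $i\in\{e,o\}$, $\hat D_e(a) = \hat x_e - \frac{\hat v_e^2}{2a}$, $\hat D_o = \hat x_o - \frac{\hat v_o^2}{2A_{\max}}$. $\mathrm{safeBack} \equiv x_e + L \le x_o \wedge \big( (a_e \le B_{\min} \wedge D_e(B_{\min}) + L < D_o) \vee (B_{\min}\le a_e \wedge v_e + a_e T < 0 \wedge D_e(a_e)+L<D_o) \vee (B_{\min}\le a_e \wedge v_e + a_e T\ge 0 \wedge D_e(B_{\min}) + (\tfrac{-a_e}{B_{\min}}+1)(\tfrac{a_e}{2}T^2 + T v_e) + L < D_o)\big)$. $\mathrm{safeFront} \equiv x_o + L \le x_e \wedge \big( (A_{\min}\le a_e \wedge \hat D_o + L < \hat D_e(A_{\min}))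 \vee (a_e \le A_{\min}\wedge \hat v_e + a_e T > 0 \wedge \hat D_o + L < \hat D_e(a_e)) \vee (a_e\le A_{\min} \wedge \hat v_e + a_e T \le 0 \wedge \hat D_o + L < \hat D_e(A_{\min}) + (\tfrac{-a_e}{A_{\min}}+1)(\tfrac{a_e}{2}T^2 + \hat v_e T))\big)$. Programs: $\mathrm{ctrl}_o \equiv a_o := *;\ ?(B_{\max}\le a_o\le A_{\max})$. $\mathrm{ctrl}_T \equiv a_e := *;\ ?(B_{\max}\le a_e\le A_{\max});\ t_c := t;\ \mathtt{if}(\neg(\mathrm{safeBack}\vee\mathrm{safeFront}))\ \{\mathtt{if}(x_e\le x_o)\ \{a_e:=*;\ ?(B_{\max}\le a_e\le B_{\min})\}\ \mathtt{else}\ \{a_e:=*;\ ?(A_{\min}\le a_e\le A_{\max})\}\}$. $\mathrm{accCor} \equiv \mathtt{if}((v_o=0\wedge a_o<0)\vee(v_o=V\wedge a_o>0))\ a_o:=0;\ \mathtt{if}((v_e=0\wedge a_e<0)\vee(v_e=V\wedge a_e>0))\ a_e:=0$. $\mathrm{plant} \equiv \{x_e'=v_e, v_e'=a_e, x_o'=v_o, v_o'=a_o, t'=1 \ \&\ t\le t_c+T \wedge 0\le v_e\le V\wedge 0\le v_o\le V\}$. $\alpha_{\mathrm{model}} \equiv \big(\mathrm{ctrl}_o;\ (\mathrm{ctrl}_T \cup ?(t<t_c+T));\ \mathrm{accCor};\ \mathrm{plant}\big)^*$. *)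

(* Defs.v *)
From Stdlib Require Import Reals.
Open Scope R_scope.

Record consts := mkConsts {
  T : R; L : R; V : R; Amin : R; Amax : R; Bmin : R; Bmax : R }.

Record st := mkSt {
  xe : R; ve : R; ae : R; xo : R; vo : R; ao : R; t : R; tc : R }.

Definition prog := st -> st -> Prop.

Definition test (P : st -> Prop) : prog := fun w v => P w /\ v = w.
Definition pseq (a b : prog) : prog := fun w v => exists u, a w u /\ b u v.
Definition pchoice (a b : prog) : prog := fun w v => a w v \/ b w v.
Inductive pstar (a : prog) : prog :=
  | pstar_refl w : pstar a w w
  | pstar_step w u v : a w u -> pstar a u v -> pstar a w v.
Definition pif (P : st -> Prop) (a : prog) : prog :=
  pchoice (pseq (test P) a) (test (fun w => ~ P w)).
Definition pifelse (P : st -> Prop) (a b : prog) : prog :=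
  pchoice (pseq (test P) a) (pseq (test (fun w => ~ P w)) b).

Definition box (a : prog) (phi : st -> Prop) (w : st) : Prop :=
  forall v, a w v -> phi v.

Definition set_ae (w : st) (r : R) : st :=
  mkSt (xe w) (ve w) r (xo w) (vo w) (ao w) (t w) (tc w).
Definition set_ao (w : st) (r : R) : st :=
  mkSt (xe w) (ve w) (ae w) (xo w) (vo w) r (t w) (tc w).
Definition set_tc (w : st) (r : R) : st :=
  mkSt (xe w) (ve w) (ae w) (xo w) (vo w) (ao w) (t w) r.

Definition assign_ae (e : st -> R) : prog := fun w v => v = set_ae w (e w).
Definition assign_ao (e : st -> R) : prog := fun w v => v = set_ao w (e w).
Definition assign_tc (e : st -> R) : prog := fun w v => v = set_tc w (e w).
Definition rand_ae : prog := fun w v => exists r, v = set_ae w r.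
Definition rand_ao : prog := fun w v => exists r, v = set_ao w r.

Section Model.
Variable c : consts.

Definition Ctx (w : st) : Prop :=
  T c > 0 /\ L c > 0 /\ V c > 0 /\
  Bmax c <= Bmin c /\ Bmin c < 0 /\ 0 < Amin c /\ Amin c <= Amax c /\
  Bmax c <= ae w <= Amax c /\ Bmax c <= ao w <= Amax c /\
  0 <= ve w <= V c /\ 0 <= vo w <= V c.

Definition De (a : R) (w : st) : R := xe w - (ve w)^2 / (2 * a).
Definition Do (w : st) : R := xo w - (vo w)^2 / (2 * Bmax c).
Definition hve (w : st) : R := ve w - V c.
Definition hvo (w : st) : R := vo w - V c.
Definition hxe (w : st) : R := xe w - V c * t w.
Definition hxo (w : st) : R := xo w - V c * t w.
Definition hDe (a : R) (w : st) : R := hxe w - (hve w)^2 / (2 * a).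
Definition hDo (w : st) : R := hxo w - (hvo w)^2 / (2 * Amax c).

Definition safeBack (w : st) : Prop :=
  xe w + L c <= xo w /\
  ( (ae w <= Bmin c /\ De (Bmin c) w + L c < Do w)
  \/ (Bmin c <= ae w /\ ve w + ae w * T c < 0 /\ De (ae w) w + L c < Do w)
  \/ (Bmin c <= ae w /\ ve w + ae w * T c >= 0 /\
      De (Bmin c) w + (- ae w / Bmin c + 1) * (ae w / 2 * (T c)^2 + T c * ve w)
        + L c < Do w)).

Definition safeFront (w : st) : Prop :=
  xo w + L c <= xe w /\
  ( (Amin c <= ae w /\ hDo w + L c < hDe (Amin c) w)
  \/ (ae w <= Amin c /\ hve w + ae w * T c > 0 /\ hDo w + L c < hDe (ae w) w)
  \/ (ae w <= Amin c /\ hve w + ae w * T c <= 0 /\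
      hDo w + L c < hDe (Amin c) w
        + (- ae w / Amin c + 1) * (ae w / 2 * (T c)^2 + hve w * T c))).

Definition ctrl_o : prog :=
  pseq rand_ao (test (fun w => Bmax c <= ao w <= Amax c)).

Definition ctrl_T : prog :=
  pseq rand_ae
  (pseq (test (fun w => Bmax c <= ae w <= Amax c))
  (pseq (assign_tc (fun w => t w))
        (pif (fun w => ~ (safeBack w \/ safeFront w))
             (pifelse (fun w => xe w <= xo w)
                (pseq rand_ae (test (fun w => Bmax c <= ae w <= Bmin c)))
                (pseq rand_ae (test (fun w => Amin c <= ae w <= Amax c))))))).

Definition accCor : prog :=
  pseq (pif (fun w => (vo w = 0 /\ ao w < 0) \/ (vo w = V c /\ ao w > 0))
            (assign_ao (fun _ => 0)))
       (pif (fun w => (ve w = 0 /\ ae w < 0) \/ (ve w = V c /\ ae w > 0))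
            (assign_ae (fun _ => 0))).

Definition plant : prog := fun w v =>
  exists (r : R) (phi : R -> st),
    0 <= r /\ phi 0 = w /\ phi r = v /\
    (forall s, 0 <= s <= r ->
       derivable_pt_lim (fun u => xe (phi u)) s (ve (phi s)) /\
       derivable_pt_lim (fun u => ve (phi u)) s (ae (phi s)) /\
       derivable_pt_lim (fun u => xo (phi u)) s (vo (phi s)) /\
       derivable_pt_lim (fun u => vo (phi u)) s (ao (phi s)) /\
       derivable_pt_lim (fun u => t (phi u)) s 1 /\
       ae (phi s) = ae w /\ ao (phi s) = ao w /\ tc (phi s) = tc w /\
       t (phi s) <= tc (phi s) + T c /\
       0 <= ve (phi s) <= V c /\ 0 <= vo (phi s) <= V c).

Definition alpha_model : prog :=
  pstar (pseq ctrl_o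
        (pseq (pchoice ctrl_T (test (fun w => t w < tc w + T c)))
        (pseq accCor plant))).

End Model.

(* Main.v *)
Require Import Defs.
From Stdlib Require Import Reals Lra Psatz Classical.
Open Scope R_scope.

Lemma dquad v0 a u : derivable_pt_lim (fun u => v0*u + a*u^2/2) u (v0 + a*u).
Proof.
  replace (v0 + a*u) with (v0 * 1 + (a * (INR 2 * u^(pred 2)) * /2 + a*u^2 * 0)) by (simpl; field).
  apply (derivable_pt_lim_plus (fun u => v0*u) (fun u => a*u^2/2)).
  - apply (derivable_pt_lim_scal (fun u => u)). apply derivable_pt_lim_id.
  - unfold Rdiv.
    apply (derivable_pt_lim_mult (fun u => a*u^2) (fun _ => /2)).
    + apply (derivable_pt_lim_scal (fun u => u^2)). apply derivable_pt_lim_pow.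
    + apply derivable_pt_lim_const.
Qed.

Lemma zero_deriv_const (h : R -> R) d :
  (forall s, 0 <= s <= d -> derivable_pt_lim h s 0) ->
  forall s, 0 <= s <= d -> h s = h 0.
Proof.
  intros H s [H0 Hs].
  destruct (Req_dec s 0) as [->|Hne]; [reflexivity|].
  destruct (MVT_cor2 h (fun _ => 0) 0 s) as [c [Hc _]].
  - lra.
  - intros c Hc; apply H; lra.
  - rewrite Rmult_0_l in Hc; lra.
Qed.

Lemma explicit_sol (f : R -> R) d x0 v0 a :
  (forall s, 0 <= s <= d -> derivable_pt_lim f s (v0 + a*s)) -> f 0 = x0 ->
  forall s, 0 <= s <= d -> f s = x0 + v0*s + a*s^2/2.
Proof.
  intros Hd Hf0 s Hs.
  assert (Hz := zero_deriv_const (fun u => f u - (v0*u + a*u^2/2)) d).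
  assert (E : f s - (v0*s + a*s^2/2) = f 0 - (v0*0 + a*0^2/2)).
  { apply (Hz); [|exact Hs].
    intros u Hu.
    replace 0 with ((v0 + a*u) - (v0 + a*u)) by ring.
    apply (derivable_pt_lim_minus f (fun u => v0*u + a*u^2/2)); [now apply Hd|].
    apply dquad. }
  rewrite Hf0 in E. lra.
Qed.

Lemma plant_explicit c w v : plant c w v ->
  exists d (phi : R -> st), 0 <= d /\ phi d = v /\
  forall s, 0 <= s <= d ->
    xe (phi s) = xe w + ve w * s + ae w * s^2/2 /\
    ve (phi s) = ve w + ae w * s /\
    xo (phi s) = xo w + vo w * s + ao w * s^2/2 /\
    vo (phi s) = vo w + ao w * s /\
    t (phi s) = t w + s /\
    ae (phi s) = ae w /\ ao (phi s) = ao w /\ tc (phi s) = tc w /\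
    t (phi s) <= tc (phi s) + T c /\
    0 <= ve (phi s) <= V c /\ 0 <= vo (phi s) <= V c.
Proof.
  intros [d [phi [Hd [H0 [Hdv Hall]]]]].
  exists d, phi. split; [exact Hd|]. split; [exact Hdv|].
  assert (Hve : forall s, 0 <= s <= d -> ve (phi s) = ve w + ae w * s).
  { intros s Hs.
    rewrite (explicit_sol (fun u => ve (phi u)) d (ve w) (ae w) 0); auto.
    - field.
    - intros u Hu. destruct (Hall u Hu) as (_ & H2 & _ & _ & _ & Ha & _).
      rewrite <- Ha. replace (ae (phi u) + 0 * u) with (ae (phi u)) by ring. exact H2.
    - rewrite H0; reflexivity. }
  assert (Hvo : forall s, 0 <= s <= d -> vo (phi s) = vo w + ao w * s).
  { intros s Hs.
    rewrite (explicit_sol (fun u => vo (phi u)) d (vo w) (ao w) 0); auto.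
    - field.
    - intros u Hu. destruct (Hall u Hu) as (_ & _ & _ & H2 & _ & _ & Ha & _).
      rewrite <- Ha. replace (ao (phi u) + 0 * u) with (ao (phi u)) by ring. exact H2.
    - rewrite H0; reflexivity. }
  intros s Hs.
  destruct (Hall s Hs) as (_ & _ & _ & _ & _ & Hae & Hao & Htc & Hdom).
  split; [|split; [auto|split; [|split; [auto|split]]]].
  - apply (explicit_sol (fun u => xe (phi u)) d); auto.
    + intros u Hu. rewrite <- Hve by auto. apply Hall; auto.
    + rewrite H0; reflexivity.
  - apply (explicit_sol (fun u => xo (phi u)) d); auto.
    + intros u Hu. rewrite <- Hvo by auto. apply Hall; auto.
    + rewrite H0; reflexivity.
  - rewrite (explicit_sol (fun u => t (phi u)) d (t w) 1 0); auto.
    + field.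
    + intros u Hu. replace (1 + 0*u) with 1 by ring. apply Hall; auto.
    + rewrite H0; reflexivity.
  - auto.
Qed.
Definition SBg (Bm x v a r D L : R) : Prop :=
  (a <= Bm /\ x - v^2/(2*Bm) + L < D) \/
  (Bm <= a /\ v + a*r < 0 /\ x - v^2/(2*a) + L < D) \/
  (Bm <= a /\ v + a*r >= 0 /\
     x - v^2/(2*Bm) + (- a / Bm + 1) * (a / 2 * r^2 + r * v) + L < D).

Lemma Rdiv_le_0_compat r1 r2 : 0 <= r1 -> 0 < r2 -> 0 <= r1 / r2.
Proof. intros. unfold Rdiv. apply Rmult_le_pos; [auto|]. apply Rlt_le, Rinv_0_lt_compat; auto. Qed.

Lemma inv_neg_le p q : q <= p -> p < 0 -> / (2*p) <= / (2*q).
Proof.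
  intros Hqp Hp.
  assert (E1 : / (2*p) = - / (-2*p)) by (field; lra).
  assert (E2 : / (2*q) = - / (-2*q)) by (field; lra).
  rewrite E1, E2. apply Ropp_le_contravar. apply Rinv_le_contravar; lra.
Qed.

Lemma inv_neg p : p < 0 -> / (2*p) < 0.
Proof. intros. apply Rinv_lt_0_compat. lra. Qed.

Lemma K1 Bm x v a r D L : Bm < 0 -> 0 <= v -> 0 <= r ->
  SBg Bm x v a r D L -> x - v^2/(2*Bm) + L < D.
Proof.
  intros HB Hv Hr [[Ha H]|[[Ha [Hc H]]|[Ha [Hc H]]]].
  - exact H.
  - assert (Han : a < 0) by nra.
    assert (I := inv_neg_le a Bm Ha Han).
    unfold Rdiv in *.
    assert (0 <= v^2) by nra. nra.
  - assert (P1 : 0 <= - a / Bm + 1).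
    { replace (- a / Bm + 1) with ((a - Bm) / (- Bm)) by (field; lra).
      apply Rdiv_le_0_compat; lra. }
    assert (P2 : 0 <= a / 2 * r^2 + r * v) by nra.
    assert (0 <= (- a / Bm + 1) * (a / 2 * r^2 + r * v)) by (apply Rmult_le_pos; auto).
    lra.
Qed.

Lemma SBg_r0 Bm x v a D L : Bm < 0 -> 0 <= v -> x - v^2/(2*Bm) + L < D -> SBg Bm x v a 0 D L.
Proof.
  intros HB Hv H. destruct (Rle_or_lt a Bm) as [Ha|Ha].
  - left; auto.
  - right; right. split; [lra|split; [lra|]].
    replace ((- a / Bm + 1) * (a / 2 * 0^2 + 0 * v)) with 0 by (field; lra). lra.
Qed.

Lemma SBg_acc Bm x v a r D L : Bm < 0 -> 0 <= v -> 0 <= r ->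
  SBg Bm x v a r D L -> (v = 0 \/ 0 < a) -> SBg Bm x v 0 r D L.
Proof.
  intros HB Hv Hr HS Hc.
  assert (K := K1 _ _ _ _ _ _ _ HB Hv Hr HS).
  right; right. split; [lra|split; [lra|]].
  destruct Hc as [->|Ha].
  - replace ((- 0 / Bm + 1) * (0 / 2 * r^2 + r * 0)) with 0 by (field; lra).
    lra.
  - destruct HS as [[Ha' _]|[[_ [Hc _]]|[_ [_ H]]]]; [lra|nra|].
    replace ((- 0 / Bm + 1) * (0 / 2 * r^2 + r * v)) with (r*v) by (field; lra).
    assert (P1 : 1 <= - a / Bm + 1).
    { replace (- a / Bm + 1) with (a / (- Bm) + 1) by (field; lra).
      assert (0 <= a / - Bm) by (apply Rdiv_le_0_compat; lra). lra. }
    assert (r * v <= (- a / Bm + 1) * (a / 2 * r^2 + r * v)).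
    { assert (0 <= r*v) by nra. assert (r*v <= a / 2 * r^2 + r * v) by nra. nra. }
    lra.
Qed.

Lemma Do_mono BM y0 u0 b s : BM < 0 -> BM <= b -> 0 <= s -> 0 <= u0 -> 0 <= u0 + b*s ->
  y0 - u0^2/(2*BM) <= (y0 + u0*s + b*s^2/2) - (u0+b*s)^2/(2*BM).
Proof.
  intros HB Hb Hs Hu Hu'.
  assert (E : (y0 + u0*s + b*s^2/2) - (u0+b*s)^2/(2*BM) - (y0 - u0^2/(2*BM))
             = ((b - BM) / (- BM)) * (s * (u0 + (u0 + b*s)) / 2)) by (field; lra).
  assert (0 <= (b - BM) / (- BM)) by (apply Rdiv_le_0_compat; lra).
  assert (0 <= s * (u0 + (u0 + b*s)) / 2) by (apply Rdiv_le_0_compat; nra).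
  assert (0 <= ((b - BM) / (- BM)) * (s * (u0 + (u0 + b*s)) / 2)) by (apply Rmult_le_pos; auto).
  lra.
Qed.

Lemma PG Bm BM L x0 v0 a y0 u0 b r s :
  Bm < 0 -> BM <= Bm -> BM <= b -> 0 <= s <= r ->
  0 <= v0 -> 0 <= v0 + a*s -> 0 <= u0 -> 0 <= u0 + b*s ->
  SBg Bm x0 v0 a r (y0 - u0^2/(2*BM)) L ->
  SBg Bm (x0 + v0*s + a*s^2/2) (v0+a*s) a (r - s)
      ((y0 + u0*s + b*s^2/2) - (u0+b*s)^2/(2*BM)) L.
Proof.
  intros HB HBM Hb Hs Hv Hv' Hu Hu' HS.
  assert (HD := Do_mono BM y0 u0 b s ltac:(lra) Hb ltac:(lra) Hu Hu').
  destruct HS as [[Ha H]|[[Ha [Hc H]]|[Ha [Hc H]]]].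
  - left. split; [exact Ha|].
    assert (E : (x0 + v0*s + a*s^2/2) - (v0+a*s)^2/(2*Bm) - (x0 - v0^2/(2*Bm))
             = - (((Bm - a) / (- Bm)) * (s * (v0 + (v0 + a*s)) / 2))) by (field; lra).
    assert (0 <= (Bm - a) / (- Bm)) by (apply Rdiv_le_0_compat; lra).
    assert (0 <= s * (v0 + (v0 + a*s)) / 2) by (apply Rdiv_le_0_compat; nra).
    assert (0 <= ((Bm - a) / (- Bm)) * (s * (v0 + (v0 + a*s)) / 2)) by (apply Rmult_le_pos; auto).
    lra.
  - assert (Han : a < 0) by nra.
    right; left. split; [exact Ha|split].
    + replace (v0 + a*s + a*(r-s)) with (v0 + a*r) by ring. exact Hc.
    + replace ((x0 + v0*s + a*s^2/2) - (v0+a*s)^2/(2*a)) with (x0 - v0^2/(2*a)) by (field; lra).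
      lra.
  - right; right. split; [exact Ha|split].
    + replace (v0 + a*s + a*(r-s)) with (v0 + a*r) by ring. exact Hc.
    + replace ((x0 + v0*s + a*s^2/2) - (v0+a*s)^2/(2*Bm) + (- a / Bm + 1) * (a / 2 * (r-s)^2 + (r-s) * (v0+a*s)))
        with (x0 - v0^2/(2*Bm) + (- a / Bm + 1) * (a / 2 * r^2 + r * v0)) by (field; lra).
      lra.
Qed.

Lemma quad_gap G0 B C S :
  0 <= G0 -> 0 <= S ->
  (forall s, 0 <= s <= S -> G0 + B*s + C*s^2/2 <= 0 -> B + C*s > 0) ->
  0 <= G0 + B*S + C*S^2/2.
Proof.
  intros HG HS H.
  destruct (Rle_or_lt 0 (G0 + B*S + C*S^2/2)) as [Hp|Hn]; [exact Hp|exfalso].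
  assert (HS' := H S ltac:(lra) ltac:(lra)).
  destruct (Rle_or_lt C 0) as [Hc|Hc].
  - assert (G0 + B*S + C*S^2/2 - G0 = S * ((B + C*S) - C*S/2)) by field.
    assert (0 <= S * ((B + C*S) - C*S/2)) by (apply Rmult_le_pos; nra).
    lra.
  - destruct (Rle_or_lt 0 B) as [Hb|Hb].
    + assert (0 <= B*S + C*S^2/2) by (assert (0 <= C*S^2/2) by (apply Rdiv_le_0_compat; nra); nra).
      lra.
    + set (m := - B / C).
      assert (Hm : B + C*m = 0) by (unfold m; field; lra).
      assert (Hm0 : 0 <= m) by (unfold m; replace (-B/C) with ((-B)/C) by (field; lra); apply Rdiv_le_0_compat; lra).
      assert (HmS : m <= S) by nra.
      assert (E : G0 + B*S + C*S^2/2 - (G0 + B*m + C*m^2/2) = C * (S - m)^2 / 2).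
      { replace B with (- C * m) by lra. field. }
      assert (0 <= C * (S - m)^2 / 2) by (apply Rdiv_le_0_compat; nra).
      assert (Hm2 := H m ltac:(lra) ltac:(lra)).
      lra.
Qed.

Lemma touch Bm BM x y v u L : Bm < 0 -> BM <= Bm -> 0 <= v -> 0 <= u ->
  x - v^2/(2*Bm) + L < y - u^2/(2*BM) -> y - x - L <= 0 -> v < u.
Proof.
  intros HB HBM Hv Hu H Hg.
  destruct (Rlt_or_le v u) as [Hl|Hl]; [exact Hl|exfalso].
  assert (I1 := inv_neg_le Bm BM HBM HB).
  assert (I2 := inv_neg BM ltac:(lra)).
  unfold Rdiv in H.
  assert (u^2 <= v^2) by nra.
  assert (v^2 * / (2*Bm) <= v^2 * / (2*BM)) by (apply Rmult_le_compat_l; nra).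
  assert (v^2 * / (2*BM) <= u^2 * / (2*BM)) by nra.
  lra.
Qed.

Lemma MG Bm BM L x0 v0 a y0 u0 b r S :
  Bm < 0 -> BM <= Bm -> BM <= b -> 0 <= S <= r ->
  (forall s, 0 <= s <= S -> 0 <= v0 + a*s /\ 0 <= u0 + b*s) ->
  x0 + L <= y0 ->
  SBg Bm x0 v0 a r (y0 - u0^2/(2*BM)) L ->
  SBg Bm (x0 + v0*S + a*S^2/2) (v0+a*S) a (r - S)
      ((y0 + u0*S + b*S^2/2) - (u0+b*S)^2/(2*BM)) L /\
  (x0 + v0*S + a*S^2/2) + L <= (y0 + u0*S + b*S^2/2).
Proof.
  intros HB HBM Hb HS Hvel Hgap HSB.
  assert (Hv0 : 0 <= v0) by (destruct (Hvel 0 ltac:(lra)); lra).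
  assert (Hu0 : 0 <= u0) by (destruct (Hvel 0 ltac:(lra)); lra).
  assert (HP : forall s, 0 <= s <= S ->
    SBg Bm (x0 + v0*s + a*s^2/2) (v0+a*s) a (r - s)
      ((y0 + u0*s + b*s^2/2) - (u0+b*s)^2/(2*BM)) L).
  { intros s Hs. destruct (Hvel s Hs). apply PG; auto; lra. }
  split; [apply HP; lra|].
  assert (Q := quad_gap (y0 - x0 - L) (u0 - v0) (b - a) S ltac:(lra) ltac:(lra)).
  assert (E : y0 + u0*S + b*S^2/2 - (x0 + v0*S + a*S^2/2) - L
              = y0 - x0 - L + (u0 - v0)*S + (b - a)*S^2/2) by field.
  cut (0 <= y0 - x0 - L + (u0 - v0)*S + (b - a)*S^2/2); [lra|].
  apply Q. intros s Hs Hg.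
  destruct (Hvel s Hs) as [Hvs Hus].
  assert (Hrs : 0 <= r - s) by lra.
  assert (K := K1 _ _ _ _ _ _ _ HB Hvs Hrs (HP s Hs)).
  assert (T1 := touch Bm BM _ _ _ _ L HB HBM Hvs Hus K).
  assert (E2 : y0 + u0*s + b*s^2/2 - (x0 + v0*s + a*s^2/2) - L
              = y0 - x0 - L + (u0 - v0)*s + (b - a)*s^2/2) by field.
  assert (T2 := T1 ltac:(lra)). lra.
Qed.

Lemma SBg_eq Bm x v a r D L x' v' r' D' :
  SBg Bm x v a r D L -> x = x' -> v = v' -> r = r' -> D = D' -> SBg Bm x' v' a r' D' L.
Proof. intros H -> -> -> ->; exact H. Qed.

Definition JB c w : Prop :=
  Ctx c w /\ xe w + L c <= xo w /\ 0 <= tc w + T c - t w /\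
  SBg (Bmin c) (xe w) (ve w) (ae w) (tc w + T c - t w) (Do c w) (L c).

Lemma ctrl_o_B c w v : JB c w -> ctrl_o c w v -> JB c v.
Proof.
  intros J [u [[r ->] [Hr ->]]]. unfold JB, Ctx, Do in *. simpl in *. tauto.
Qed.

Lemma ctrlT_B c w v : JB c w -> pchoice (ctrl_T c) (test (fun w => t w < tc w + T c)) w v -> JB c v.
Proof.
  intros J [H|[_ ->]]; [|exact J].
  destruct H as [u1 [[a1 ->] [u2 [[Ha1 ->] [u3 [-> Hif]]]]]].
  destruct J as (HC & Hg & Hr & HS).
  assert (HC' := HC). destruct HC' as (HT & HL & HV & HB1 & HB2 & HA1 & HA2 & Hae & Hao & Hve & Hvo).
  assert (K := K1 _ _ _ _ _ _ _ HB2 (proj1 Hve) Hr HS).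
  destruct Hif as [[u4 [[HP ->] Hbody]]|[HnP ->]].
  - destruct Hbody as [[u5 [[Hle ->] [u6 [[a2 ->] [Ha2 ->]]]]]|[u5 [[Hnle ->] _]]].
    + simpl in *. unfold JB, Ctx; simpl.
      repeat split; try lra.
      left. split; [lra|]. exact K.
    + simpl in Hnle. lra.
  - apply NNPP in HnP. simpl in *.
    destruct HnP as [[_ HSB]|[HF _]]; [|simpl in HF; lra].
    unfold JB, Ctx; simpl. repeat split; try lra.
    assert (HS' : SBg (Bmin c) (xe w) (ve w) a1 (T c) (Do c w) (L c)) by exact HSB.
    apply (SBg_eq _ _ _ _ _ _ _ _ _ _ _ HS'); try reflexivity. ring.
Qed.

Lemma accCor_B c w v : JB c w -> accCor c w v -> JB c v.
Proof.
  intros J [u [H1 H2]].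
  assert (Ju : JB c u).
  { destruct H1 as [[u' [[_ ->] ->]]|[_ ->]]; [|exact J].
    unfold JB, Ctx, Do in *; simpl in *. repeat split; try tauto; lra. }
  clear J H1.
  destruct H2 as [[u' [[HC ->] ->]]|[_ ->]]; [|exact Ju].
  destruct Ju as (HC' & Hg & Hr & HS).
  assert (HC'' := HC'). destruct HC'' as (HT & HL & HV & HB1 & HB2 & HA1 & HA2 & Hae & Hao & Hve & Hvo).
  unfold JB, Ctx; simpl. repeat split; try lra; try tauto.
  apply (SBg_acc _ _ _ (ae u)); auto; try lra.
Qed.

Lemma plant_B c w v : JB c w -> plant c w v -> JB c v.
Proof.
  intros J Hp.
  destruct (plant_explicit c w v Hp) as [d [phi [Hd [<- Hs]]]].
  destruct J as (HC & Hg & Hr & HS).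
  assert (HC' := HC). destruct HC' as (HT & HL & HV & HB1 & HB2 & HA1 & HA2 & Hae & Hao & Hve & Hvo).
  destruct (Hs d ltac:(lra)) as (Exe & Eve & Exo & Evo & Et & Eae & Eao & Etc & Hdom & Hdve & Hdvo).
  assert (Hdr : 0 <= d <= tc w + T c - t w) by lra.
  assert (Hvel : forall s, 0 <= s <= d -> 0 <= ve w + ae w * s /\ 0 <= vo w + ao w * s).
  { intros s Hs'. destruct (Hs s Hs') as (_ & E1 & _ & E2 & _ & _ & _ & _ & _ & H1 & H2).
    lra. }
  destruct (MG (Bmin c) (Bmax c) (L c) (xe w) (ve w) (ae w) (xo w) (vo w) (ao w)
               (tc w + T c - t w) d HB2 HB1 (proj1 Hao) Hdr Hvel Hg HS) as [HS' Hg'].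
  unfold JB, Ctx. rewrite Eae, Eao. repeat split; try lra.
  apply (SBg_eq _ _ _ _ _ _ _ _ _ _ _ HS').
  - rewrite Exe; reflexivity.
  - rewrite Eve; reflexivity.
  - rewrite Etc, Et; ring.
  - unfold Do. rewrite Exo, Evo; reflexivity.
Qed.

Definition stepP c : prog :=
  pseq (ctrl_o c)
        (pseq (pchoice (ctrl_T c) (test (fun w => t w < tc w + T c)))
        (pseq (accCor c) (plant c))).

Lemma loop_B c w v : JB c w -> pstar (stepP c) w v -> JB c v.
Proof.
  intros J H. induction H as [w|w u v Hs _ IH]; [exact J|].
  apply IH.
  destruct Hs as [u1 [H1 [u2 [H2 [u3 [H3 H4]]]]]].
  eapply plant_B; [|exact H4].
  eapply accCor_B; [|exact H3].
  eapply ctrlT_B; [|exact H2].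
  eapply ctrl_o_B; [exact J|exact H1].
Qed.

Lemma part1 : forall (c : consts) (w : st),
     Ctx c w /\ xe w + L c <= xo w /\ De (Bmin c) w + L c < Do c w /\
     tc w = t w - T c ->
     box (alpha_model c) (fun v => xe v + L c <= xo v) w.
Proof.
  intros c w (HC & Hg & HD & Htc) v Hrun.
  assert (J : JB c w).
  { assert (HC' := HC). destruct HC' as (HT & HL & HV & HB1 & HB2 & HA1 & HA2 & Hae & Hao & Hve & Hvo).
    unfold JB. repeat split; try assumption; try lra.
    replace (tc w + T c - t w) with 0 by lra.
    apply SBg_r0; [lra|lra|exact HD]. }
  exact (proj1 (proj2 (loop_B c w v J Hrun))).
Qed.

Definition DF c w := (V c * t w - xo w) - (V c - vo w)^2/(2 * - Amax c).

Definition JF c w : Prop :=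
  Ctx c w /\ xo w + L c <= xe w /\ 0 <= tc w + T c - t w /\
  SBg (- Amin c) (V c * t w - xe w) (V c - ve w) (- ae w) (tc w + T c - t w) (DF c w) (L c).

Lemma DF_eq c w : Ctx c w -> DF c w = - hDo c w.
Proof.
  intros (HT & HL & HV & HB1 & HB2 & HA1 & HA2 & _).
  unfold DF, hDo, hxo, hvo. field. lra.
Qed.

Lemma hDe_eq c w a : a <> 0 ->
  hDe c a w = - ((V c * t w - xe w) - (V c - ve w)^2/(2 * - a)).
Proof. intros. unfold hDe, hxe, hve. field. auto. Qed.

Lemma SF_conv c w : Ctx c w -> safeFront c w ->
  SBg (- Amin c) (V c * t w - xe w) (V c - ve w) (- ae w) (T c) (DF c w) (L c).
Proof.
  intros HC [_ HS].
  assert (HC' := HC). destruct HC' as (HT & HL & HV & HB1 & HB2 & HA1 & HA2 & Hae & Hao & Hve & Hvo).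
  rewrite (DF_eq c w HC).
  destruct HS as [[Ha H]|[[Ha [Hc H]]|[Ha [Hc H]]]].
  - left. split; [lra|]. rewrite hDe_eq in H by lra. lra.
  - assert (Hap : 0 < ae w) by (unfold hve in Hc; nra).
    right; left. split; [lra|split].
    + unfold hve in Hc. lra.
    + rewrite hDe_eq in H by lra. replace (- - ae w) with (ae w) by ring. lra.
  - right; right. split; [lra|split].
    + unfold hve in Hc. lra.
    + rewrite hDe_eq in H by lra.
      replace ((- - ae w / - Amin c + 1) * (- ae w / 2 * T c ^ 2 + T c * (V c - ve w)))
        with (- ((- ae w / Amin c + 1) * (ae w / 2 * T c ^ 2 + hve c w * T c)))
        by (unfold hve; field; lra).
      lra.
Qed.

Lemma ctrl_o_F c w v : JF c w -> ctrl_o c w v -> JF c v.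
Proof.
  intros J [u [[r ->] [Hr ->]]]. unfold JF, DF, Ctx in *. simpl in *. tauto.
Qed.

Lemma ctrlT_F c w v : JF c w -> pchoice (ctrl_T c) (test (fun w => t w < tc w + T c)) w v -> JF c v.
Proof.
  intros J [H|[_ ->]]; [|exact J].
  destruct H as [u1 [[a1 ->] [u2 [[Ha1 ->] [u3 [-> Hif]]]]]].
  destruct J as (HC & Hg & Hr & HS).
  assert (HC' := HC). destruct HC' as (HT & HL & HV & HB1 & HB2 & HA1 & HA2 & Hae & Hao & Hve & Hvo).
  assert (Hv' : 0 <= V c - ve w) by lra.
  assert (HBm : - Amin c < 0) by lra.
  assert (K := K1 _ _ _ _ _ _ _ HBm Hv' Hr HS).
  destruct Hif as [[u4 [[HP ->] Hbody]]|[HnP ->]].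
  - destruct Hbody as [[u5 [[Hle ->] _]]|[u5 [[Hnle ->] [u6 [[a2 ->] [Ha2 ->]]]]]].
    + simpl in Hle. lra.
    + simpl in *. unfold JF, Ctx; simpl.
      repeat split; try lra.
      left. split; [lra|]. exact K.
  - apply NNPP in HnP. simpl in *.
    destruct HnP as [[HB _]|HF]; [simpl in HB; lra|].
    assert (HC2 : Ctx c (set_tc (set_ae w a1) (t w))) by (unfold Ctx; simpl; tauto).
    assert (HS' := SF_conv _ _ HC2 HF).
    unfold JF; simpl. repeat split; try lra; try tauto.
    apply (SBg_eq _ _ _ _ _ _ _ _ _ _ _ HS'); try reflexivity. ring.
Qed.

Lemma accCor_F c w v : JF c w -> accCor c w v -> JF c v.
Proof.
  intros J [u [H1 H2]].
  assert (Ju : JF c u).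
  { destruct H1 as [[u' [[_ ->] ->]]|[_ ->]]; [|exact J].
    unfold JF, DF, Ctx in *; simpl in *. repeat split; try tauto; lra. }
  clear J H1.
  destruct H2 as [[u' [[HC ->] ->]]|[_ ->]]; [|exact Ju].
  destruct Ju as (HC' & Hg & Hr & HS).
  assert (HC'' := HC'). destruct HC'' as (HT & HL & HV & HB1 & HB2 & HA1 & HA2 & Hae & Hao & Hve & Hvo).
  unfold JF, DF, Ctx in *; simpl. repeat split; try lra; try tauto.
  rewrite Ropp_0.
  apply (SBg_acc _ _ _ (- ae u)); auto; try lra.
Qed.

Lemma plant_F c w v : JF c w -> plant c w v -> JF c v.
Proof.
  intros J Hp.
  destruct (plant_explicit c w v Hp) as [d [phi [Hd [<- Hs]]]].
  destruct J as (HC & Hg & Hr & HS).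
  assert (HC' := HC). destruct HC' as (HT & HL & HV & HB1 & HB2 & HA1 & HA2 & Hae & Hao & Hve & Hvo).
  destruct (Hs d ltac:(lra)) as (Exe & Eve & Exo & Evo & Et & Eae & Eao & Etc & Hdom & Hdve & Hdvo).
  assert (Hdr : 0 <= d <= tc w + T c - t w) by lra.
  assert (Hvel : forall s, 0 <= s <= d -> 0 <= (V c - ve w) + (- ae w) * s /\ 0 <= (V c - vo w) + (- ao w) * s).
  { intros s Hs'. destruct (Hs s Hs') as (_ & E1 & _ & E2 & _ & _ & _ & _ & _ & H1 & H2).
    lra. }
  assert (HBm : - Amin c < 0) by lra.
  assert (HBM : - Amax c <= - Amin c) by lra.
  assert (Hb : - Amax c <= - ao w) by lra.
  assert (Hg0 : (V c * t w - xe w) + L c <= (V c * t w - xo w)) by lra.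
  destruct (MG (- Amin c) (- Amax c) (L c) (V c * t w - xe w) (V c - ve w) (- ae w)
               (V c * t w - xo w) (V c - vo w) (- ao w)
               (tc w + T c - t w) d HBm HBM Hb Hdr Hvel Hg0 HS) as [HS' Hg'].
  unfold JF, Ctx. rewrite Eae, Eao. repeat split; try lra.
  apply (SBg_eq _ _ _ _ _ _ _ _ _ _ _ HS').
  - rewrite Exe, Et. field.
  - rewrite Eve. ring.
  - rewrite Etc, Et; ring.
  - unfold DF. rewrite Exo, Evo, Et. field. lra.
Qed.

Lemma loop_F c w v : JF c w -> pstar (stepP c) w v -> JF c v.
Proof.
  intros J H. induction H as [w|w u v Hs _ IH]; [exact J|].
  apply IH.
  destruct Hs as [u1 [H1 [u2 [H2 [u3 [H3 H4]]]]]].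
  eapply plant_F; [|exact H4].
  eapply accCor_F; [|exact H3].
  eapply ctrlT_F; [|exact H2].
  eapply ctrl_o_F; [exact J|exact H1].
Qed.

Lemma part2 : forall (c : consts) (w : st),
     Ctx c w /\ xo w + L c <= xe w /\ hDo c w + L c < hDe c (Amin c) w /\
     tc w = t w - T c ->
     box (alpha_model c) (fun v => xo v + L c <= xe v) w.
Proof.
  intros c w (HC & Hg & HD & Htc) v Hrun.
  assert (J : JF c w).
  { assert (HC' := HC). destruct HC' as (HT & HL & HV & HB1 & HB2 & HA1 & HA2 & Hae & Hao & Hve & Hvo).
    unfold JF. repeat split; try assumption; try lra.
    replace (tc w + T c - t w) with 0 by lra.
    apply SBg_r0; [lra|lra|].
    rewrite (DF_eq c w HC). rewrite hDe_eq in HD by lra. lra. }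
  exact (proj1 (proj2 (loop_F c w v J Hrun))).
Qed.

Theorem theorem1 :
  (forall (c : consts) (w : st),
     Ctx c w /\ xe w + L c <= xo w /\ De (Bmin c) w + L c < Do c w /\
     tc w = t w - T c ->
     box (alpha_model c) (fun v => xe v + L c <= xo v) w) /\
  (forall (c : consts) (w : st),
     Ctx c w /\ xo w + L c <= xe w /\ hDo c w + L c < hDe c (Amin c) w /\
     tc w = t w - T c ->
     box (alpha_model c) (fun v => xo v + L c <= xe v) w).
Proof. split; [exact part1|exact part2]. Qed.
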